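(* Let $G$ be a $(2K_2, K_1+P_4)$-free graph. Then $\chi(G)\le \omega(G)+2$.
   Context: All graphs are finite, simple and undirected. $P_n$, $K_n$ denote the path and complete graph on $n$ vertices; $2K_2$ is the disjoint union of two copies of $K_2$; $G_1+G_2$ denotes the join of $G_1$ and $G_2$ (disjoint union plus all edges between them), so $K_1+P_4$ is a vertex adjacent to all vertices of an induced $P_4$. A graph is $\mathcal F$-free if it has no induced subgraph isomorphic to a member of $\mathcal F$. $\chi(G)$ is the chromatic number and $\omega(G)$ the clique number. *)

(* Defs.v *)
(* A simple graph is a symmetric irreflexive relation on a finType. *)
From mathcomp Require Import all_boot.
Set Implicit Arguments. Unset Strict Implicit. Unset Printing Implicit Defensive.

Definition induced_sub (H T : finType) (eH : rel H) (e : rel T) : Prop :=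
  exists f : H -> T, injective f /\ forall x y, e (f x) (f y) = eH x y.

Definition adj_2K2 : rel 'I_4 := fun x y =>
  let a := nat_of_ord x in let b := nat_of_ord y in
  ((a == 0) && (b == 1)) || ((a == 1) && (b == 0)) ||
  ((a == 2) && (b == 3)) || ((a == 3) && (b == 2)).

Definition adj_K1P4 : rel 'I_5 := fun x y =>
  let a := nat_of_ord x in let b := nat_of_ord y in
  (a != b) && ((a == 4) || (b == 4) || (a == b.+1) || (b == a.+1)).

Definition colorable (T : finType) (e : rel T) (k : nat) : bool :=
  [exists c : {ffun T -> 'I_k}, [forall x, forall y, e x y ==> (c x != c y)]].

Lemma colorable_exists (T : finType) (e : rel T) (irr : irreflexive e) :
  exists k, colorable e k.
Proof.
exists #|T|; apply/existsP; exists [ffun x => enum_rank x].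
apply/forallP => x; apply/forallP => y; apply/implyP => exy.
rewrite !ffunE; apply/negP => /eqP /enum_rank_inj Exy.
by rewrite Exy irr in exy.
Qed.

Definition chi (T : finType) (e : rel T) (irr : irreflexive e) : nat :=
  ex_minn (colorable_exists irr).

Definition clique (T : finType) (e : rel T) (A : {set T}) : bool :=
  [forall x in A, forall y in A, (x != y) ==> e x y].

Definition omega (T : finType) (e : rel T) : nat :=
  \max_(A : {set T} | clique e A) #|A|.

(* Main.v *)
Require Import Defs.
From mathcomp Require Import all_boot.
From mathcomp Require Import zify.
Set Implicit Arguments. Unset Strict Implicit. Unset Printing Implicit Defensive.


Lemma ar1 a b t : t < a -> a - t <= b -> a - t.+1 < b. Proof. lia. Qed.
Lemma ar2 a t : t < a -> a - t <= a - t.+1 -> False. Proof. lia. Qed.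
Lemma ar3 a b t : a - t <= b -> a - t.+1 <= b. Proof. lia. Qed.
Lemma ar4 a m : 1 + a.+1 <= m -> a < m - 1. Proof. lia. Qed.
Lemma ar5 a m : a < m - 1 -> a < m + 2. Proof. lia. Qed.
Lemma ar6 a b c : a <= b -> c < a -> c != b. Proof. lia. Qed.
Lemma ar6' a b c : a <= b -> c < a -> b != c. Proof. lia. Qed.
Lemma neqs m : 1 < m -> [/\ m - 1 != m, m - 1 != m + 1 & m != m + 1]. Proof. by split; lia. Qed.
Lemma neqs2 m : 1 < m -> [/\ m != m - 1, m + 1 != m - 1 & m + 1 != m]. Proof. by split; lia. Qed.
Lemma ar7 n k : k = 1 + n -> 1 + (1 + n) <= k -> False. Proof. lia. Qed.
Lemma lts m : [/\ m - 1 <= m, m - 1 <= m + 1, m - 1 < m + 2, m < m + 2 & m + 1 < m + 2].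
Proof. by split; lia. Qed.

Lemma no2K2 (T : finType) (e : rel T) (sym : symmetric e) (irr : irreflexive e)
  (h : ~ induced_sub adj_2K2 e) (a b c d : T) :
  e a b -> e c d -> ~~ e a c -> ~~ e a d -> ~~ e b c -> ~~ e b d -> False.
Proof.
move=> eab ecd /negbTE nac /negbTE nad /negbTE nbc /negbTE nbd.
have eba : e b a by rewrite sym.
have edc : e d c by rewrite sym.
have nca : e c a = false by rewrite sym.
have nda : e d a = false by rewrite sym.
have ncb : e c b = false by rewrite sym.
have ndb : e d b = false by rewrite sym.
apply: h; exists (fun i : 'I_4 => nth a [:: a; b; c; d] i); split; last first.
  by move=> [[|[|[|[|x]]]] Hx] [[|[|[|[|y]]]] Hy] //=;
     rewrite ?irr ?eab ?eba ?ecd ?edc ?nac ?nad ?nbc ?nbd ?nca ?nda ?ncb ?ndb.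
have nab : a != b by apply: contraTneq eab => ->; rewrite irr.
have ncd : c != d by apply: contraTneq ecd => ->; rewrite irr.
have nac' : a != c by apply: contraTneq ecd => <-; rewrite nad.
have nad' : a != d by apply: contraTneq ecd => <-; rewrite nca.
have nbc' : b != c by apply: contraTneq eab => ->; rewrite nac.
have nbd' : b != d by apply: contraTneq ecd => <-; rewrite ncb.
move=> x y E; apply/val_inj; move: x y E => [[|[|[|[|x]]]] Hx] [[|[|[|[|y]]]] Hy] //= E;
  rewrite ?E ?eqxx in nab ncd nac' nad' nbc' nbd'; by [].
Qed.

Lemma nogem (T : finType) (e : rel T) (sym : symmetric e) (irr : irreflexive e)
  (h : ~ induced_sub adj_K1P4 e) (w p0 p1 p2 p3 : T) :
  e p0 p1 -> e p1 p2 -> e p2 p3 -> ~~ e p0 p2 -> ~~ e p0 p3 -> ~~ e p1 p3 ->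
  e w p0 -> e w p1 -> e w p2 -> e w p3 -> False.
Proof.
move=> e01 e12 e23 /negbTE n02 /negbTE n03 /negbTE n13 ew0 ew1 ew2 ew3.
have e10 : e p1 p0 by rewrite sym.
have e21 : e p2 p1 by rewrite sym.
have e32 : e p3 p2 by rewrite sym.
have n20 : e p2 p0 = false by rewrite sym.
have n30 : e p3 p0 = false by rewrite sym.
have n31 : e p3 p1 = false by rewrite sym.
have e0w : e p0 w by rewrite sym.
have e1w : e p1 w by rewrite sym.
have e2w : e p2 w by rewrite sym.
have e3w : e p3 w by rewrite sym.
apply: h; exists (fun i : 'I_5 => nth w [:: p0; p1; p2; p3; w] i); split; last first.
  by move=> [[|[|[|[|[|x]]]]] Hx] [[|[|[|[|[|y]]]]] Hy] //=;
     rewrite ?irr ?e01 ?e12 ?e23 ?n02 ?n03 ?n13 ?e10 ?e21 ?e32 ?n20 ?n30 ?n31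
             ?ew0 ?ew1 ?ew2 ?ew3 ?e0w ?e1w ?e2w ?e3w.
have d01 : p0 != p1 by apply: contraTneq e01 => ->; rewrite irr.
have d12 : p1 != p2 by apply: contraTneq e12 => ->; rewrite irr.
have d23 : p2 != p3 by apply: contraTneq e23 => ->; rewrite irr.
have d02 : p0 != p2 by apply: contraTneq e23 => <-; rewrite n03.
have d03 : p0 != p3 by apply: contraTneq e23 => <-; rewrite n20.
have d13 : p1 != p3 by apply: contraTneq e01 => ->; rewrite n03.
have dw0 : w != p0 by apply: contraTneq ew0 => ->; rewrite irr.
have dw1 : w != p1 by apply: contraTneq ew1 => ->; rewrite irr.
have dw2 : w != p2 by apply: contraTneq ew2 => ->; rewrite irr.
have dw3 : w != p3 by apply: contraTneq ew3 => ->; rewrite irr.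
move=> x y E; apply/val_inj; move: x y E => [[|[|[|[|[|x]]]]] Hx] [[|[|[|[|[|y]]]]] Hy] //= E;
  rewrite ?E ?eqxx in d01 d12 d23 d02 d03 d13 dw0 dw1 dw2 dw3; by [].
Qed.

Lemma cliqueP (T : finType) (e : rel T) (A : {set T}) :
  clique e A -> forall x y, x \in A -> y \in A -> x != y -> e x y.
Proof.
move=> /forallP H x y xA yA nxy.
by move: (H x) => /implyP /(_ xA) /forallP /(_ y) /implyP /(_ yA) /implyP /(_ nxy).
Qed.

Lemma cliqueI (T : finType) (e : rel T) (A : {set T}) :
  (forall x y, x \in A -> y \in A -> x != y -> e x y) -> clique e A.
Proof.
move=> H; apply/forallP => x; apply/implyP => xA; apply/forallP => y;
apply/implyP => yA; apply/implyP => nxy; exact: H.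
Qed.

Lemma clique_le (T : finType) (e : rel T) (A : {set T}) :
  clique e A -> #|A| <= omega e.
Proof. by move=> cA; rewrite /omega (bigD1 A cA) /= leq_maxl. Qed.

Lemma grundy (T : finType) (e : rel T) (sym : symmetric e) (irr : irreflexive e)
  (S : {set T})
  (P4 : forall a b c d, a \in S -> b \in S -> c \in S -> d \in S ->
     e a b -> e b c -> e c d -> ~~ e a c -> ~~ e a d -> ~~ e b d -> False) :
  exists f : T -> nat,
    (forall x y, x \in S -> y \in S -> e x y -> f x != f y) /\
    (forall x, x \in S -> exists Q : {set T},
       [/\ clique e Q, Q \subset S & #|Q| = (f x).+1]).
Proof.
pose P (g : {ffun T -> 'I_#|T|}) :=
  [forall x in S, forall y in S, e x y ==> (g x != g y)].
pose g0 : {ffun T -> 'I_#|T|} := [ffun x => enum_rank x].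
have Pg0 : P g0.
  apply/forallP => x; apply/implyP => _; apply/forallP => y; apply/implyP => _.
  apply/implyP => exy; rewrite !ffunE; apply/negP => /eqP /enum_rank_inj Exy.
  by rewrite Exy irr in exy.
pose w (h : {ffun T -> 'I_#|T|}) := \sum_(x in S) (h x : nat).
case: (arg_minnP w Pg0) => g Pg gmin.
have gP : forall x y, x \in S -> y \in S -> e x y -> g x != g y.
  move=> x y xS yS exy.
  by move: Pg => /forallP /(_ x) /implyP /(_ xS) /forallP /(_ y) /implyP /(_ yS) /implyP /(_ exy).
have gru : forall x j, x \in S -> j < g x ->
    exists2 y, y \in S & e x y && (g y == j :> nat).
  move=> x j xS ltj.
  case: (boolP [exists y in S, e x y && (g y == j :> nat)]).
    by move=> /exists_inP.
  move=> H; exfalso.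
  have ltjT : j < #|T| by apply: ltn_trans ltj (ltn_ord (g x)).
  pose g' : {ffun T -> 'I_#|T|} := [ffun z => if z == x then Ordinal ltjT else g z].
  have Pg' : P g'.
    apply/forallP => u; apply/implyP => uS; apply/forallP => v; apply/implyP => vS.
    apply/implyP => euv; rewrite !ffunE.
    case: (u =P x) => [Eu|nu]; case: (v =P x) => [Ev|nv].
    - by rewrite Eu Ev irr in euv.
    - apply/negP => /eqP Ej; apply/negP: H; apply/negPn/exists_inP; exists v => //.
      by rewrite -Eu euv -Ej eqxx.
    - apply/negP => /eqP Ej; apply/negP: H; apply/negPn/exists_inP; exists u => //.
      by rewrite -Ev sym euv Ej eqxx.
    - exact: gP.
  have := gmin g' Pg'; apply/negP; rewrite -ltnNge /w (bigD1 x xS) (bigD1 x xS) /=.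
  rewrite ffunE eqxx /=.
  have -> : \sum_(i in S | i != x) (g' i : nat) = \sum_(i in S | i != x) (g i : nat).
    by apply: eq_bigr => i /andP [_ nix]; rewrite ffunE (negbTE nix).
  by rewrite ltn_add2r.
have claim : forall x, x \in S -> forall t, t <= g x -> exists Q : {set T},
   [/\ clique e Q, Q \subset S, #|Q| = t.+1 & forall q, q \in Q -> g x - t <= g q].
  move=> x xS; elim=> [|t IH] ltx.
    exists [set x]; split.
    - by apply: cliqueI => a b; rewrite !in_set1 => /eqP -> /eqP ->; rewrite eqxx.
    - by rewrite sub1set.
    - by rewrite cards1.
    - by move=> q; rewrite in_set1 => /eqP ->; rewrite subn0.
  have [Q [cQ QS cardQ colQ]] := IH (ltnW ltx).
  pose j := g x - t.+1.
  pose N q := [set y in S | e q y && (g y == j :> nat)].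
  have Nnon : forall q, q \in Q -> exists2 y, y \in S & e q y && (g y == j :> nat).
    move=> q qQ; apply: gru; first exact: (subsetP QS).
    by rewrite /j; apply: ar1 ltx (colQ q qQ).
  have [q1 q1Q] : exists q, q \in Q by apply/card_gt0P; rewrite cardQ.
  case: (@arg_minnP _ q1 (fun q => q \in Q) (fun q => #|N q|) q1Q) => q0 q0Q q0min.
  have [y yS /andP [eq0y /eqP gyj]] := Nnon q0 q0Q.
  have yall : forall q, q \in Q -> e q y.
    move=> q qQ; case: (q =P q0) => [-> // | nq].
    apply/negPn/negP => nqy.
    have eq0q : e q0 q by apply: (cliqueP cQ) => //; apply/eqP => E; apply: nq.
    have nsub : ~~ (N q \subset N q0).
      apply/negP => sub.
      have : N q == N q0 by rewrite eqEcard sub q0min.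
      move=> /eqP EN.
      have : y \in N q0 by rewrite inE yS eq0y gyj eqxx.
      by rewrite -EN inE (negbTE nqy) andbF.
    have [z zN znN] := subsetPn nsub.
    move: zN; rewrite inE => /andP [zS /andP [eqz /eqP gzj]].
    have nq0z : ~~ e q0 z by move: znN; rewrite inE zS gzj eqxx andbT.
    apply: (P4 y q0 q z) => //.
    - exact: (subsetP QS).
    - exact: (subsetP QS).
    - by rewrite sym.
    - by rewrite sym.
    - apply/negP => eyz; have := gP y z yS zS eyz; by rewrite -val_eqE /= gyj gzj eqxx.
  have yQ : y \notin Q.
    apply/negP => yQ; have := colQ y yQ; rewrite gyj /j; exact: ar2 ltx.
  exists (y |: Q); split.
  - apply: cliqueI => a b; rewrite !in_setU1.
    case/orP => [/eqP -> | aQ]; case/orP => [/eqP -> | bQ].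
    + by rewrite eqxx.
    + by move=> _; rewrite sym; apply: yall.
    + by move=> _; apply: yall.
    + exact: (cliqueP cQ).
  - by rewrite subUset sub1set yS QS.
  - by rewrite cardsU1 yQ cardQ.
  - move=> q; rewrite in_setU1 => /orP [/eqP -> | qQ].
      by rewrite gyj.
    exact: ar3 (colQ q qQ).
exists (fun x => (g x : nat)); split.
  by move=> x y xS yS exy; apply: gP.
move=> x xS; have [Q [cQ QS cQc _]] := claim x xS (g x) (leqnn _).
by exists Q.
Qed.

Lemma colorable_of (T : finType) (e : rel T) (k : nat) (c : T -> nat) :
  (forall x, c x < k) -> (forall x y, e x y -> c x != c y) -> colorable e k.
Proof.
move=> ck cP; apply/existsP; exists [ffun x => Ordinal (ck x)].
apply/forallP => x; apply/forallP => y; apply/implyP => exy.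
by rewrite !ffunE -val_eqE /=; apply: cP.
Qed.

Lemma chi_le (T : finType) (e : rel T) (irr : irreflexive e) k :
  colorable e k -> chi irr <= k.
Proof. by rewrite /chi; case: ex_minnP => m _ mmin; apply: mmin. Qed.

Lemma max_clique (T : finType) (e : rel T) :
  exists2 K : {set T}, clique e K & #|K| = omega e.
Proof.
have c0 : clique e set0 by apply/forallP => x; rewrite in_set0.
have : 0 < #|[pred A : {set T} | clique e A]| by apply/card_gt0P; exists set0.
move=> /(eq_bigmax_cond (fun A : {set T} => #|A|)) [K cK EK].
by exists K => //; rewrite /omega -EK.
Qed.

Theorem corollary3p2 (T : finType) (e : rel T)
  (sym : symmetric e) (irr : irreflexive e)
  (h2K2 : ~ induced_sub adj_2K2 e) (hK1P4 : ~ induced_sub adj_K1P4 e) :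
  chi irr <= omega e + 2.
Proof.
have [K cK cardK] := max_clique e.
set m := omega e in cardK *.
have noedge2 : forall x y, e x y -> 2 <= m.
  move=> x y exy; have cxy : clique e [set x; y].
    apply: cliqueI => a b; rewrite !in_set2.
    by case/orP => /eqP ->; case/orP => /eqP ->; rewrite ?eqxx // sym.
  have := clique_le cxy; rewrite cards2.
  have -> : (x != y) by apply: contraTneq exy => ->; rewrite irr.
  by [].
case: (leqP m 1) => [small | big].
  apply: chi_le; apply: (@colorable_of _ _ _ (fun _ => 0)) => [x|x y exy]; first by rewrite addn2.
  by move: (noedge2 x y exy); rewrite ltnNge small.
have [v vK] : exists v, v \in K by apply/card_gt0P; rewrite cardK; exact: ltnW big.
have [k kK] : exists k, k \in K :\ v.
  apply/card_gt0P; have := cardsD1 v K; rewrite vK cardK => E; by move: big; rewrite E add1n ltnS.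
move: kK; rewrite in_setD1 => /andP [kv kK].
have Kadj : forall a b, a \in K -> b \in K -> a != b -> e a b := cliqueP cK.
pose S := [set x | e v x].
have P4 : forall a b c d, a \in S -> b \in S -> c \in S -> d \in S ->
     e a b -> e b c -> e c d -> ~~ e a c -> ~~ e a d -> ~~ e b d -> False.
  move=> a b c d; rewrite !inE => va vb vc vd eab ebc ecd nac nad nbd.
  exact: (nogem sym irr hK1P4 eab ebc ecd nac nad nbd va vb vc vd).
have [f [fP fQ]] := grundy sym irr P4.
have fb : forall x, e v x -> f x < m - 1.
  move=> x vx; have xS : x \in S by rewrite inE.
  have [Q [cQ QS cQc]] := fQ x xS.
  have vQ : v \notin Q.
    apply/negP => /(subsetP QS); by rewrite inE irr.
  have cvQ : clique e (v |: Q).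
    apply: cliqueI => a b; rewrite !in_setU1.
    case/orP => [/eqP -> | aQ]; case/orP => [/eqP -> | bQ].
    + by rewrite eqxx.
    + by move=> _; move: (subsetP QS b bQ); rewrite inE.
    + by move=> _; move: (subsetP QS a aQ); rewrite inE sym.
    + exact: (cliqueP cQ).
  have := clique_le cvQ; rewrite cardsU1 vQ cQc; exact: ar4.
pose c x := if e v x then f x
            else if (x == v) || ~~ e k x then m - 1
            else if [forall y in K, (y != v) ==> e y x] then m else m + 1.
have cM : forall x, ~~ e v x -> m - 1 <= c x.
  move=> x nvx; rewrite /c (negbTE nvx); have [? ? ? ? ?] := lts m; case: ifP => _ //; case: ifP => _ //.
apply: chi_le; apply: (@colorable_of _ _ _ c).
  move=> x; rewrite /c; case: ifP => [vx|_]; first by apply: ar5; apply: fb.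
  have [? ? ? ? ?] := lts m; case: ifP => _ //; case: ifP => _ //.
move=> x y exy.
case: (boolP (e v x)) => vx; case: (boolP (e v y)) => vy.
- by rewrite /c vx vy; apply: fP; rewrite ?inE.
- rewrite {1}/c vx; exact: ar6 (cM y vy) (fb x vx).
- rewrite {2}/c vy; exact: ar6' (cM x vx) (fb y vy).
have xnv : x != v by apply: contraTneq exy => ->; rewrite (negbTE vy).
have ynv : y != v by apply: contraTneq exy => ->; rewrite sym (negbTE vx).
have evk : e v k by apply: Kadj; rewrite // eq_sym.
have nxv : ~~ e x v by rewrite sym.
have nyv : ~~ e y v by rewrite sym.
rewrite /c (negbTE vx) (negbTE vy) (negbTE xnv) (negbTE ynv) /=.
have [? ? ?] := neqs big; have [? ? ?] := neqs2 big.
case: (boolP (e k x)) => kx; case: (boolP (e k y)) => ky /=.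
3: { case: ifP => _ //. }
2: { case: ifP => _ //. }
2: { exfalso; apply: (no2K2 sym irr h2K2 exy evk) => //; by rewrite sym. }
have gemcase : forall x0 y1, e x0 y1 -> ~~ e v x0 -> ~~ e v y1 -> e k x0 -> e k y1 ->
    ~~ [forall z in K, (z != v) ==> e z x0] -> False.
  move=> {kx ky vx vy xnv ynv nxv nyv exy} x0 y1 exy vx vy kx ky
         /forall_inPn [y0 y0K]; rewrite negb_imply => /andP [y0v ny0x].
  have y0k : y0 != k by apply: contraTneq kx => <-.
  have evy0 : e v y0 by apply: Kadj; rewrite // eq_sym.
  have eyy0 : e y1 y0.
    apply/negPn/negP => nyy0.
    apply: (no2K2 sym irr h2K2 exy evy0) => //; by rewrite sym.
  apply: (nogem sym irr hK1P4 (w := k) evy0 (_ : e y0 y1) (_ : e y1 x0)) => //.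
  - by rewrite sym.
  - by rewrite sym.
  - by apply: Kadj.
  - by apply: Kadj; rewrite // eq_sym.
case: (boolP [forall z in K, (z != v) ==> e z x]) => Fx;
  case: (boolP [forall z in K, (z != v) ==> e z y]) => Fy //.
  exfalso.
  have notK : forall z, ~~ e v z -> z \in K -> z = v.
    move=> z vz zK; apply/eqP; apply: contraNT vz => zv; by apply: Kadj; rewrite // eq_sym.
  have xK : x \notin K :\ v by rewrite in_setD1 xnv /=; apply/negP => /(notK x vx) /eqP; rewrite (negbTE xnv).
  have yK : y \notin K :\ v by rewrite in_setD1 ynv /=; apply/negP => /(notK y vy) /eqP; rewrite (negbTE ynv).
  have xy : x != y by apply: contraTneq exy => ->; rewrite irr.
  have FxP : forall z, z \in K :\ v -> e z x.
    move=> z; rewrite in_setD1 => /andP [zv zK].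
    by move: Fx => /forall_inP /(_ z zK) /implyP /(_ zv).
  have FyP : forall z, z \in K :\ v -> e z y.
    move=> z; rewrite in_setD1 => /andP [zv zK].
    by move: Fy => /forall_inP /(_ z zK) /implyP /(_ zv).
  have cQ : clique e (x |: (y |: (K :\ v))).
    apply: cliqueI => a b; rewrite !in_setU1 => Ha Hb nab.
    case/orP: Ha => [/eqP Ea | /orP [/eqP Ea | aK]]; case/orP: Hb => [/eqP Eb | /orP [/eqP Eb | bK]];
      rewrite ?Ea ?Eb ?eqxx in nab *; try done;
      first [ by rewrite sym | by rewrite sym FxP | by rewrite sym FyP | exact: FxP | exact: FyP | idtac ].
    move: aK bK => /setD1P [_ aK] /setD1P [_ bK]; exact: Kadj.
  have E := cardsD1 v K; rewrite vK cardK in E.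
  have := clique_le cQ; rewrite cardsU1 in_setU1 negb_or xy xK cardsU1 yK.
  exact: ar7 E.
exfalso; exact: (gemcase x y exy vx vy kx ky Fx).
Qed.
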